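(* Let $X$ be a Banach space (real or complex) and let $x\in X$ be non-zero. If $x$ is a right symmetric point of $X$ and $x$ is smooth, then $x$ is a left symmetric point of $X$.
   Context: In a normed space $X$ over $\mathbb{K}$, $x\perp_{BJ}y$ means $\|x+\lambda y\|\ge\|x\|$ for all $\lambda\in\mathbb{K}$; $x$ is a left symmetric point if $x\perp_{BJ}y$ implies $y\perp_{BJ}x$ for all $y\in X$, and a right symmetric point if $y\perp_{BJ}x$ implies $x\perp_{BJ}y$ for all $y\in X$. A non-zero $x$ is smooth if there is a unique norm-one $F\in X^*$ with $F(x)=\|x\|$. *)

(* Defs.v *)
From HB Require Import structures.
From mathcomp Require Import all_boot all_order all_algebra.
From mathcomp Require Import all_classical all_reals all_analysis.
From mathcomp Require Import complex.
Set Implicit Arguments. Unset Strict Implicit. Unset Printing Implicit Defensive.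
Import Order.TTheory GRing.Theory Num.Theory.
Import numFieldNormedType.Exports.
Local Open Scope ring_scope.

Section BJ.
Variables (K : numFieldType) (X : normedModType K).

Definition bj_orth (x y : X) : Prop := forall l : K, `|x| <= `|x + l *: y|.

Definition left_symmetric (x : X) : Prop :=
  forall y : X, bj_orth x y -> bj_orth y x.

Definition right_symmetric (x : X) : Prop :=
  forall y : X, bj_orth y x -> bj_orth x y.

Definition dual_elem (F : X -> K) : Prop :=
  (forall (a : K) (u v : X), F (a *: u + v) = a * F u + F v) /\ continuous F.

(* ||F|| = sup_{||y|| <= 1} |F y| = 1, written out *)
Definition norm_one (F : X -> K) : Prop :=
  (forall y : X, `|y| <= 1 -> `|F y| <= 1) /\
  (forall e : K, 0 < e -> exists y : X, `|y| <= 1 /\ 1 - e < `|F y|).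

Definition supporting_functional (x : X) (F : X -> K) : Prop :=
  dual_elem F /\ norm_one F /\ F x = (`|x| : K).

Definition smooth (x : X) : Prop :=
  x <> 0 /\ exists F, supporting_functional x F /\
    forall G, supporting_functional x G -> G = F.

End BJ.

(* Main.v *)
From HB Require Import structures.
From mathcomp Require Import all_boot all_order all_algebra.
From mathcomp Require Import all_classical all_reals all_analysis.
From mathcomp Require Import complex.
From mathcomp Require Import ring lra.
Set Implicit Arguments. Unset Strict Implicit. Unset Printing Implicit Defensive.
Import Order.TTheory GRing.Theory Num.Theory.
Import numFieldNormedType.Exports.
Local Open Scope ring_scope.
Local Open Scope classical_set_scope.
Require Import Defs.

Section HBsec.
Variables (R : realType) (V : lmodType R) (p : V -> R).
Hypothesis pD : forall u v, p (u + v) <= p u + p v.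
Hypothesis pZ : forall (r : R) v, p (r *: v) = `|r| * p v.

Lemma hb_p0 : p 0 = 0.
Proof. by have := pZ 0 0; rewrite scale0r normr0 mul0r. Qed.

Lemma hb_pN v : p (- v) = p v.
Proof. by rewrite -scaleN1r pZ normrN normr1 mul1r. Qed.

Definition good (G : set (V * R)) :=
  [/\ G (0,0), (forall a b, G a -> G b -> G (a.1 + b.1, a.2 + b.2)),
      (forall r a, G a -> G (r *: a.1, r * a.2)) & (forall a, G a -> a.2 <= p a.1)].

Lemma good_fun G : good G -> forall v t t', G (v,t) -> G (v,t') -> t = t'.
Proof.
case=> _ Gadd Gsc Gdom.
suff H : forall v t t', G (v,t) -> G (v,t') -> t <= t'.
  by move=> v t t' h1 h2; apply/eqP; rewrite eq_le !(H v).
move=> v t t' h1 h2.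
have := Gdom _ (Gadd _ _ h1 (Gsc (-1) _ h2)) => /=.
by rewrite scaleN1r subrr hb_p0 mulN1r subr_le0.
Qed.

Lemma good_ext A u0 : good A -> ~ (exists t, A (u0, t)) ->
  exists B, good B /\ A `<` B.
Proof.
move=> gA nA; have [A0 Aadd Asc Adom] := gA.
pose S := fun s => exists v t, A (v,t) /\ s = t - p (v - u0).
have key : forall v t w r, A (v,t) -> A (w,r) -> t - p (v - u0) <= p (w + u0) - r.
  move=> v t w r h1 h2; have := Adom _ (Aadd _ _ h1 h2) => /= h.
  rewrite lerBrDr addrAC lerBlDr (le_trans h) //.
  have e : v + w = (w + u0) + (v - u0) by rewrite addrACA subrr addr0 addrC.
  rewrite e; exact: pD.
have hS : has_sup S.
  split; first by exists (0 - p (0 - u0)), 0, 0.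
  exists (p (0 + u0) - 0) => s [v [t [h ->]]]; exact: key h A0.
pose c := sup S.
have c1 : forall v t, A (v,t) -> t - p (v - u0) <= c.
  by move=> v t h; apply: sup_upper_bound => //; exists v, t.
have c2 : forall w r, A (w,r) -> c <= p (w + u0) - r.
  move=> w r h; apply: ge_sup; first by case: hS.
  by move=> s [v [t [h' ->]]]; exact: key h' h.
pose B := fun q => exists v t s, A (v,t) /\ q = (v + s *: u0, t + s * c).
exists B; split; last first.
  split.
    by move=> [v t] h; exists v, t, 0; rewrite scale0r mul0r !addr0.
  move=> BA; apply: nA; exists c.
  apply: BA; exists 0, 0, 1; split => //.
  by rewrite add0r scale1r add0r mul1r.
split.
- by exists 0, 0, 0; rewrite scale0r mul0r !addr0.
- move=> _ _ [v1 [t1 [s1 [h1 ->]]]] [v2 [t2 [s2 [h2 ->]]]] /=.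
  exists (v1 + v2), (t1 + t2), (s1 + s2); split; first exact: (Aadd _ _ h1 h2).
  by rewrite scalerDl mulrDl addrACA [in X in (_, X)]addrACA.
- move=> r _ [v [t [s [h ->]]]] /=.
  exists (r *: v), (r * t), (r * s); split; first exact: (Asc _ _ h).
  by rewrite scalerDr scalerA mulrDr mulrA.
- move=> _ [v [t [s [h ->]]]] /=.
  have [->|s0] := eqVneq s 0; first by rewrite scale0r mul0r !addr0; exact: Adom h.
  have hw : A (s^-1 *: v, s^-1 * t) by exact: Asc _ _ h.
  have ev : v + s *: u0 = s *: (s^-1 *: v + u0) by rewrite scalerDr scalerA mulfV // scale1r.
  have et : t + s * c = s * (s^-1 * t + c) by rewrite mulrDr mulrA mulfV // mul1r.
  rewrite ev et pZ.
  have [sgt|slt] := ltrP 0 s.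
    rewrite gtr0_norm // ler_pM2l //.
    by have := c2 _ _ hw; rewrite lerBrDr addrC.
  have slt' : s < 0 by rewrite lt_neqAle s0.
  rewrite ltr0_norm // mulNr -mulrN ler_nM2l //.
  have := c1 _ _ (Asc (-1) _ hw) => /=.
  rewrite scaleN1r mulN1r.
  by rewrite -[- (s^-1 *: v) - u0]opprD hb_pN => hh; lra.
Qed.

Lemma hb_ext (G0 : set (V * R)) : good G0 ->
  exists g : V -> R, (forall r u v, g (r *: u + v) = r * g u + g v) /\
    (forall v, g v <= p v) /\ (forall v t, G0 (v,t) -> g v = t).
Proof.
move=> gG0.
pose P := fun G : set (V * R) => G = set0 \/ (good G /\ G0 `<=` G).
have [A [PA Amax]] : exists A, P A /\ forall B, A `<` B -> ~ P B.
  apply: Zorn_bigcup => F FP Ftot.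
  have [[X0 [FX0 [gX0 sX0]]]|nog] :=
    pselect (exists X, F X /\ (good X /\ G0 `<=` X)); last first.
    left; apply/seteqP; split => // q [X FX Xq].
    case: (FP _ FX) => [Xe|gX]; first by rewrite Xe in Xq.
    by apply: nog; exists X.
  have gF : forall X q, F X -> X q -> good X.
    move=> X q FX Xq; case: (FP _ FX) => [Xe|[]//].
    by rewrite Xe in Xq.
  right; split; last first.
    by move=> q hq; exists X0 => //; exact: sX0.
  have [A0 _ _ _] := gX0.
  split.
  - by exists X0.
  - move=> a b [X1 F1 a1] [X2 F2 b2].
    have [s12|s21] := Ftot _ _ F1 F2.
      have [_ Xadd _ _] := gF _ _ F2 b2.
      by exists X2 => //; apply: Xadd => //; exact: s12.
    have [_ Xadd _ _] := gF _ _ F1 a1.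
    by exists X1 => //; apply: Xadd => //; exact: s21.
  - move=> r a [X1 F1 a1]; have [_ _ Xsc _] := gF _ _ F1 a1.
    by exists X1 => //; exact: Xsc.
  - move=> a [X1 F1 a1]; have [_ _ _ Xd] := gF _ _ F1 a1; exact: Xd.
case: PA => [A0|[gA sA]].
  exfalso; apply: (Amax G0); last by right; split.
  rewrite A0; split => //; move=> /(_ (0,0)) h.
  by case: gG0 => h0 _ _ _; apply: h.
have tot : forall u, exists t, A (u, t).
  move=> u; apply: contrapT => nu.
  have [B [gB AB]] := good_ext gA nu.
  apply: (Amax B AB); right; split => //.
  by move=> q /sA; apply: (properW AB).
have [g gP] : exists g : V -> R, forall u, A (u, g u).
  by exists (fun u => sval (cid (tot u))) => u; exact: (svalP (cid (tot u))).
have [A0 Aadd Asc Adom] := gA.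
exists g; split; [|split].
- move=> r u v; apply: (good_fun gA (gP _)).
  exact: (Aadd _ _ (Asc r _ (gP u)) (gP v)).
- by move=> v; exact: (Adom _ (gP v)).
- by move=> v t h; apply: (good_fun gA (gP _)); exact: sA.
Qed.

Lemma add4ACA (A1 B1 C1 D1 A2 B2 C2 D2 : V) :
  A1 + B1 + C1 + D1 + (A2 + B2 + C2 + D2) = (A1 + A2) + (B1 + B2) + (C1 + C2) + (D1 + D2).
Proof.
rewrite addrACA; congr (_ + _); rewrite addrACA; congr (_ + _); exact: addrACA.
Qed.

Lemma hb4 (x z1 z2 z3 : V) (c0 : R) :
  (forall a b c d : R, a * c0 <= p (a *: x + b *: z1 + c *: z2 + d *: z3)) ->
  exists g : V -> R, (forall r u v, g (r *: u + v) = r * g u + g v) /\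
    (forall v, g v <= p v) /\ g x = c0 /\ g z1 = 0 /\ g z2 = 0 /\ g z3 = 0.
Proof.
move=> H.
pose G0 := fun q : V * R => exists a b c d : R,
  q = (a *: x + b *: z1 + c *: z2 + d *: z3, a * c0).
have gG0 : good G0.
  split.
  - by exists 0, 0, 0, 0; rewrite !scale0r !addr0 mul0r.
  - move=> _ _ [a [b [c [d ->]]]] [a' [b' [c' [d' ->]]]] /=.
    exists (a + a'), (b + b'), (c + c'), (d + d'); congr pair; last by rewrite mulrDl.
    by rewrite !scalerDl add4ACA.
  - move=> r _ [a [b [c [d ->]]]] /=.
    exists (r * a), (r * b), (r * c), (r * d).
    by rewrite !scalerDr !scalerA mulrA.
  - by move=> _ [a [b [c [d ->]]]] /=.
have [g [glin [gp gG]]] := hb_ext gG0.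
exists g; split => //; split => //; split; [|split; [|split]].
- by rewrite (gG _ c0) //; exists 1, 0, 0, 0; rewrite !scale0r !addr0 scale1r mul1r.
- by rewrite (gG _ 0) //; exists 0, 1, 0, 0; rewrite !scale0r scale1r add0r !addr0 mul0r.
- by rewrite (gG _ 0) //; exists 0, 0, 1, 0; rewrite !scale0r scale1r !add0r addr0 mul0r.
- by rewrite (gG _ 0) //; exists 0, 0, 0, 1; rewrite !scale0r scale1r !add0r mul0r.
Qed.

End HBsec.

Section Gen.
Variables (K : numFieldType) (X : normedModType K).

Lemma lip1_cont (f : X -> K) : (forall u v, `|f u - f v| <= `|u - v|) -> continuous f.
Proof.
move=> H x; apply/cvgrPdist_lt => e e0; near=> y.
apply: le_lt_trans (H x y) _; near: y.
by apply: cvgr_dist_lt.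
Unshelve. all: by end_near.
Qed.

Lemma lin0 (G : X -> K) : (forall (a : K) u v, G (a *: u + v) = a * G u + G v) -> G 0 = 0.
Proof.
move=> Gl; have := Gl 1 0 0; rewrite scale1r addr0 mul1r => h.
by apply: (@addrI _ (G 0)); rewrite addr0 -h.
Qed.

Lemma linB (G : X -> K) : (forall (a : K) u v, G (a *: u + v) = a * G u + G v) ->
  forall u v, G (u - v) = G u - G v.
Proof.
move=> Gl u v; have := Gl (-1) v u; rewrite scaleN1r mulN1r addrC => ->.
by rewrite addrC.
Qed.

Lemma supp_of (x : X) (G : X -> K) : x <> 0 ->
  (forall (a : K) u v, G (a *: u + v) = a * G u + G v) ->
  (forall u, `|G u| <= `|u|) -> G x = `|x| -> supporting_functional x G.
Proof.
move=> x0 Gl Gb Gx; split; [split => //|split => //].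
  by apply: lip1_cont => u v; rewrite -linB.
split; first by move=> y y1; exact: le_trans (Gb y) y1.
move=> e e0; exists (`|x|^-1 *: x).
have nx : `|x| != 0 by rewrite normr_eq0; apply/eqP.
have e1 : G (`|x|^-1 *: x) = 1.
  by have := Gl (`|x|^-1) x 0; rewrite addr0 (lin0 Gl) addr0 Gx mulVf.
rewrite e1 normr1 normrZ normfV normr_id mulVf //; split => //.
by rewrite ltrBlDr ltrDl.
Qed.

Lemma dom_of (x z : X) : bj_orth x z -> forall a b : K,
  `|a| * `|x| <= `|a *: x + b *: z|.
Proof.
move=> xz a b; have [->|a0] := eqVneq a 0.
  by rewrite normr0 mul0r normr_ge0.
have -> : a *: x + b *: z = a *: (x + (b / a) *: z).
  by rewrite scalerDr scalerA mulrCA mulfV // mulr1.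
rewrite normrZ ler_wpM2l //; exact: xz.
Qed.

Lemma main_gen (x : X) : x <> 0 ->
  (forall z, bj_orth x z -> exists G, supporting_functional x G /\ G z = 0) ->
  (forall y, exists a : K, forall b : K, `|y + a *: x| <= `|y + b *: x|) ->
  right_symmetric x -> smooth x -> left_symmetric x.
Proof.
move=> x0 key mn rs [_ [F [sF uF]]] y xy.
have Fy : F y = 0.
  by have [G [sG Gy]] := key _ xy; rewrite -(uF _ sG).
have [a ha] := mn y.
pose z := y + a *: x.
have zx : bj_orth z x by move=> l; rewrite /z -addrA -scalerDl; exact: ha.
have [G [sG Gz]] := key _ (rs _ zx).
rewrite (uF _ sG) in Gz.
have [[Flin _] [_ Fx]] := sF.
have : a * `|x| = 0 by rewrite -Fx -[RHS]Gz /z addrC Flin Fy addr0.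
move=> /eqP; rewrite mulf_eq0 normr_eq0 => /orP[/eqP a0|/eqP //].
move=> l; have := ha l; by rewrite a0 scale0r addr0.
Qed.

End Gen.

Lemma key_real (R : realType) (X : normedModType R) (x z : X) :
  x <> 0 -> bj_orth x z -> exists G, supporting_functional x G /\ G z = 0.
Proof.
move=> x0 xz.
have hyp : forall a b c d : R, a * `|x| <= `|a *: x + b *: z + c *: (0 : X) + d *: (0 : X)|.
  move=> a b c d; rewrite !scaler0 !addr0.
  apply: le_trans (dom_of xz a b); apply: ler_wpM2r => //; exact: ler_norm.
have [g [gl [gp [gx [gz _]]]]] := @hb4 R X (fun v => `|v|) (@ler_normD _ _) (@normrZ _ _)
  x z 0 0 `|x| hyp.
exists g; split => //; apply: supp_of => // u.
rewrite ler_norml gp andbT lerNl.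
have := gp (- u); rewrite normrN.
by rewrite -scaleN1r -[_ *: u]addr0 gl (lin0 gl) addr0 mulN1r.
Qed.

Lemma lipk_cont (K : numFieldType) (V : normedModType K) (f : V -> K) (k : K) : 0 < k ->
  (forall u v, `|f u - f v| <= k * `|u - v|) -> continuous f.
Proof.
move=> k0 H x; apply/cvgrPdist_lt => e e0; near=> y.
apply: le_lt_trans (H x y) _; rewrite -ltr_pdivlMl //; near: y.
by apply: cvgr_dist_lt; [exact: cvg_id | rewrite mulr_gt0 ?invr_gt0].
Unshelve. all: by end_near.
Qed.

Lemma min_real (R : realType) (X : normedModType R) (x y : X) : x <> 0 ->
  exists a : R, forall b, `|y + a *: x| <= `|y + b *: x|.
Proof.
move=> x0; have nx : 0 < `|x| by rewrite normr_gt0; apply/eqP.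
pose M := 2 * `|y| / `|x|.
have M0 : 0 <= M by rewrite /M divr_ge0 // mulr_ge0.
pose f := fun a : R => `|y + a *: x|.
have fc : continuous f.
  apply: (@lipk_cont _ _ _ `|x|) => // u v.
  rewrite /f (le_trans (ler_dist_dist _ _)) //.
  by rewrite opprD addrACA subrr add0r -scalerBl normrZ mulrC.
have MM : - M <= M by lra.
have [c cI cmin] := @EVT_min R f (- M) M MM (continuous_subspaceT fc).
exists c => b.
have [bM|bM] := lerP `|b| M.
  by apply: cmin; rewrite in_itv /= -ler_norml.
have f0 : f c <= `|y| by have := cmin 0; rewrite /f scale0r addr0; apply; rewrite in_itv /= oppr_le0 M0.
have h1 : 2 * `|y| < `|b| * `|x| by rewrite -ltr_pdivrMr.
have h2 : `|b| * `|x| <= `|y + b *: x| + `|y|.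
  rewrite -normrZ {1}(_ : b *: x = (y + b *: x) - y); first exact: ler_normB.
  by rewrite addrAC subrr add0r.
rewrite -/(f c) -/(f b); move: f0 h1 h2; rewrite /f; lra.
Qed.

Lemma key_min_real : True. Proof. by []. Qed.

Local Open Scope complex_scope.
Local Notation Re := complex.Re.
Local Notation Im := complex.Im.


Section Cplx.
Variable R : realType.
Local Notation C := R[i].

Lemma ReD (u v : C) : Re (u + v) = Re u + Re v.
Proof. by case: u => a b; case: v => c d; simpc. Qed.

Lemma addC (a b : R) : (a + b)%:C = a%:C + b%:C :> C.
Proof. by rewrite -!complexr0; simpc. Qed.

Lemma mulC (a b : R) : (a * b)%:C = a%:C * b%:C :> C.
Proof. by rewrite -!complexr0; simpc. Qed.

Lemma ReC (r : R) : Re (r%:C) = r. Proof. by []. Qed.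

Lemma realC (w : C) : 0 <= w -> w = (Re w)%:C.
Proof. by move=> w0; rewrite RRe_real // ger0_real. Qed.

Lemma normC_Re (w : C) : `|w| = (Re `|w|)%:C.
Proof. exact/realC/normr_ge0. Qed.

Lemma ReM_C (a : R) (w : C) : Re (a%:C * w) = a * Re w.
Proof. by case: w => u v; rewrite -complexr0; simpc. Qed.

Lemma normCr (r : R) : `|r%:C| = `|r|%:C.
Proof. by rewrite normc_def /= expr0n /= addr0 sqrtr_sqr. Qed.

Lemma normi : `|'i : C| = 1.
Proof. by rewrite normc_def /= expr0n /= add0r expr1n sqrtr1. Qed.

Lemma Re_le_norm (w : C) : `|Re w| <= Re `|w|.
Proof. by rewrite -lecR -normC_Re normc_ge_Re. Qed.

Lemma norm_le_ReIm (w : C) : Re `|w| <= `|Re w| + `|Im w|.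
Proof.
rewrite -lecR addC -normC_Re -!normCr.
by rewrite {1}[w]complexE (le_trans (ler_normD _ _)) // normrM normi mul1r.
Qed.

Lemma subC (a b : R) : (a - b)%:C = a%:C - b%:C :> C.
Proof. by rewrite -!complexr0; simpc. Qed.

Lemma Im_le_norm (w : C) : `|Im w| <= Re `|w|.
Proof.
have := Re_le_norm (w * 'i); rewrite ReiNIm normrN normrM normi mulr1 //.
Qed.

Lemma min_cplx (X : normedModType C) (x y : X) : x <> 0 ->
  exists a : C, forall b, `|y + a *: x| <= `|y + b *: x|.
Proof.
move=> x0.
pose nR (v : X) := Re `|v|.
have nRE : forall v, `|v| = (nR v)%:C by move=> v; apply: realC.
have Nx : 0 < nR x.
  have : 0 < `|x| by rewrite normr_gt0; apply/eqP.
  by rewrite nRE => h; rewrite -(ltcR 0); exact: h.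
have Ny : 0 <= nR y.
  have : 0 <= `|y| by [].
  by rewrite nRE => h; rewrite -(lecR 0); exact: h.
pose phi (q : R * R) : C := q.1%:C + 'i * q.2%:C.
pose f (q : R * R) := nR (y + phi q *: x).
have fc : continuous f.
  apply: (@lipk_cont _ _ _ (2 * nR x)); first by rewrite mulr_gt0.
  move=> q q'.
  have m1 : `|q.1 - q'.1| <= `|q - q'| by rewrite prod_normE le_max lexx.
  have m2 : `|q.2 - q'.2| <= `|q - q'| by rewrite prod_normE le_max lexx orbT.
  apply: (@le_trans _ _ ((`|q.1 - q'.1| + `|q.2 - q'.2|) * nR x)); last first.
    rewrite mulrAC; apply: ler_wpM2r; [exact: ltW | lra].
  rewrite -lecR -normCr subC /f mulC addC -!nRE -!normCr.
  apply: le_trans (ler_dist_dist _ _) _.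
  rewrite opprD addrACA subrr add0r -scalerBl normrZ ler_wpM2r //.
  have -> : phi q - phi q' = (q.1 - q'.1)%:C + 'i * (q.2 - q'.2)%:C.
    by rewrite /phi !subC; ring.
  by rewrite (le_trans (ler_normD _ _)) // normrM normi mul1r.
pose M := 2 * nR y / nR x.
have M0 : 0 <= M by rewrite /M divr_ge0 ?mulr_ge0 // ltW.
have cA := compact_setX (@segment_compact R (- M) M) (@segment_compact R (- M) M).
have A0 : (0, 0) \in `[- M, M] `*` `[- M, M].
  by rewrite inE /= in_itv /= oppr_le0 M0.
have [c cA' cmin] := compact_EVT_min (ex_intro _ _ (set_mem A0)) cA (continuous_subspaceT fc).
exists (phi c) => b.
rewrite !nRE lecR -/(f c).
have bE : phi (Re b, Im b) = b by rewrite /phi /= -complexE.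
have [[bM1 bM2]|bM] := pselect (`|Re b| <= M /\ `|Im b| <= M).
  rewrite -{1}bE; apply: cmin.
  by rewrite inE /=; split; rewrite in_itv /=; [move: bM1|move: bM2]; rewrite ler_norml.
have hb : M < Re `|b|.
  case: (lerP `|Re b| M) => h1.
    case: (lerP `|Im b| M) => h2; first by exfalso; apply: bM.
    exact: lt_le_trans h2 (Im_le_norm b).
  exact: lt_le_trans h1 (Re_le_norm b).
have f0 : f c <= nR y.
  have -> : nR y = f (0, 0) by rewrite /f /phi /= rmorph0 mulr0 addr0 scale0r addr0.
  exact: cmin.
have h1 : 2 * nR y < Re `|b| * nR x by rewrite -ltr_pdivrMr.
have h2 : Re `|b| * nR x <= nR (y + b *: x) + nR y.
  rewrite -lecR addC mulC -!nRE -normrZ.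
  rewrite {1}(_ : b *: x = (y + b *: x) - y); first exact: ler_normB.
  by rewrite addrAC subrr add0r.
move: f0 h1 h2; lra.
Qed.

End Cplx.

Section CR.
Variables (R : realType) (X : normedModType R[i]).
Definition XR : Type := X.
HB.instance Definition _ := GRing.Zmodule.on XR.
Definition scR (r : R) (v : XR) : XR := (r%:C *: (v : X)).
Fact scRA a b v : scR a (scR b v) = scR (a * b) v.
Proof. by rewrite /scR scalerA mulC. Qed.
Fact scR1 : left_id 1 scR.
Proof. by move=> v; rewrite /scR scale1r. Qed.
Fact scRDr : right_distributive scR +%R.
Proof. by move=> a u v; rewrite /scR scalerDr. Qed.
Fact scRDl v : {morph scR^~ v : a b / a + b}.
Proof. by move=> a b; rewrite /scR addC scalerDl. Qed.
HB.instance Definition _ := GRing.Zmodule_isLmodule.Build R XR scRA scR1 scRDr scRDl.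

Lemma oppC (a : R) : (- a)%:C = - a%:C :> R[i].
Proof. by rewrite -!complexr0; simpc. Qed.

Lemma ReRI (a d : R) : Re (a%:C + 'i * d%:C) = a.
Proof. by rewrite -!complexr0; simpc. Qed.

Lemma ReG (a d : R) : Re (a%:C - 'i * d%:C) = a.
Proof. by rewrite -!complexr0; simpc. Qed.

Lemma key_cplx (x z : X) : x <> 0 -> bj_orth x z ->
  exists G : X -> R[i], supporting_functional x G /\ G z = 0.
Proof.
move=> x0 xz.
pose p := fun v : XR => Re `|v : X|.
have pE : forall v : X, `|v| = (p v)%:C by move=> v; apply: realC.
have pD : forall u v : XR, p (u + v) <= p u + p v.
  by move=> u v; rewrite -lecR addC -!pE; exact: ler_normD.
have pZ : forall (r : R) (v : XR), p (r *: v) = `|r| * p v.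
  move=> r v; rewrite /p; change (Re `|r%:C *: (v : X)| = `|r| * Re `|v : X|).
  by rewrite normrZ normCr ReM_C.
have hyp : forall a b c d : R, a * p x <=
    p (a *: (x : XR) + b *: (z : XR) + c *: ('i *: z : XR) + d *: ('i *: x : XR)).
  move=> a b c d.
  have -> : (a *: (x : XR) + b *: (z : XR) + c *: ('i *: z : XR) + d *: ('i *: x : XR))
     = ((a%:C + 'i * d%:C) *: x + (b%:C + 'i * c%:C) *: z : X).
    change (a%:C *: x + b%:C *: z + c%:C *: ('i *: z) + d%:C *: ('i *: x)
       = (a%:C + 'i * d%:C) *: x + (b%:C + 'i * c%:C) *: z).
    rewrite !scalerDl !scalerA [c%:C * _]mulrC [d%:C * _]mulrC.
    rewrite [RHS]addrACA -[LHS]addrA; congr (_ + _); exact: addrC.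
  rewrite -lecR mulC -!pE.
  apply: le_trans (dom_of xz _ _); apply: ler_wpM2r => //.
  have e : a%:C = (Re (a%:C + 'i * d%:C))%:C by rewrite ReRI.
  rewrite {1}e.
  by apply: le_trans (normc_ge_Re _); rewrite lecR; exact: ler_norm.
have [g [glin [gp [gx [gz [giz gix]]]]]] := @hb4 R XR p pD pZ x z ('i *: z) ('i *: x) (p x) hyp.
have g0 : g 0 = 0.
  have := glin 1 0 0; rewrite scale1r addr0 mul1r => h.
  by apply: (@addrI _ (g 0)); rewrite addr0 -h.
have gadd : forall u v : X, g (u + v) = g u + g v.
  by move=> u v; have := glin 1 u v; rewrite scale1r mul1r.
have gsc : forall (r : R) (u : X), g (r%:C *: u) = r * g u.
  move=> r u; have := glin r u 0; rewrite g0 addr0 addr0; exact.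
have gN : forall u : X, g (- u) = - g u.
  by move=> u; apply: (@addrI _ (g u)); rewrite -gadd !subrr g0.
have ii : 'i * 'i = -1 :> R[i] by rewrite -expr2 sqr_i.
pose G := fun u : X => (g u)%:C - 'i * (g ('i *: u))%:C.
have Gadd : forall u v, G (u + v) = G u + G v.
  move=> u v; rewrite /G scalerDr !gadd !addC; ring.
have GC : forall (r : R) u, G (r%:C *: u) = r%:C * G u.
  move=> r u; have e : 'i *: (r%:C *: u) = r%:C *: ('i *: u) by rewrite !scalerA mulrC.
  rewrite /G e !gsc !mulC; ring.
have Gi : forall u, G ('i *: u) = 'i * G u.
  move=> u; rewrite /G scalerA ii scaleN1r gN oppC.
  rewrite mulrBr mulrA ii; ring.
have Glin : forall (l : R[i]) u v, G (l *: u + v) = l * G u + G v.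
  move=> l u v; rewrite Gadd; congr (_ + _).
  rewrite {1 2}[l]complexE scalerDl -scalerA Gadd GC Gi GC; by rewrite mulrDl mulrA.
have ReGE : forall u, Re (G u) = g u by move=> u; rewrite /G ReG.
have Gb : forall u, `|G u| <= `|u|.
  move=> u; have [->|Gu0] := eqVneq (G u) 0; first by rewrite normr0.
  pose w := `|G u| / G u.
  have nw : `|w| = 1 by rewrite /w normf_div normr_id divff // normr_eq0.
  have Gw : G (w *: u) = `|G u|.
    have G0 : G 0 = 0 by rewrite /G scaler0 g0 rmorph0 mulr0 subr0.
    by rewrite -[w *: u]addr0 Glin G0 addr0 /w divfK.
  have := gp (w *: u); rewrite -ReGE Gw -lecR -realC // -pE normrZ nw mul1r.
  done.
have Gz : G z = 0 by rewrite /G gz giz rmorph0 mulr0 subr0.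
exists G; split => //; apply: supp_of => //.
by rewrite /G gx gix rmorph0 mulr0 subr0 -pE.
Qed.

End CR.

Close Scope complex_scope.
Close Scope classical_set_scope.

Theorem lemma3p16 :
  (forall (R : realType) (X : completeNormedModType R) (x : X),
      x <> 0 -> right_symmetric x -> smooth x -> left_symmetric x) /\
  (forall (R : realType) (X : completeNormedModType R[i]) (x : X),
      x <> 0 -> right_symmetric x -> smooth x -> left_symmetric x).
Proof.
split.
- move=> R X x x0; apply: (main_gen x0) => [z xz|y].
    exact: key_real x0 xz.
  exact: min_real y x0.
- move=> R X x x0; apply: (main_gen x0) => [z xz|y].
    exact: key_cplx x0 xz.
  exact: min_cplx y x0.
Qed.
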